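(* Let $N>0$ and let $E$ be a set of integers of cardinality at most $2^N$. Then there is a set $B=\{b_i\}_{i\in\mathbb{Z}}$ of integers such that (i) the sets $b_i+E$, $i\in\mathbb{Z}$, are pairwise disjoint; (ii) $b_i\in[i4^{N+1},(i+1)4^{N+1})$ for every $i\in\mathbb{Z}$; and (iii) $\mathbb{Z}=\bigcup_{n=-4^{N+1}}^{4^{N+1}}(n+B)$. *)

(* Defs.v *)
From HB Require Import structures.
From mathcomp Require Import all_boot all_order all_algebra.
From mathcomp Require Export finmap.
Set Implicit Arguments.
Unset Strict Implicit.
Unset Printing Implicit Defensive.

(* Main.v *)
Require Import Defs.
From HB Require Import structures.
From mathcomp Require Import all_boot all_order all_algebra finmap.
From mathcomp Require Import zify ring lra.
Import Order.TTheory GRing.Theory Num.Theory.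
Local Open Scope ring_scope.

Definition genum (n : nat) : int := if odd n then Negz n./2 else Posz n./2.
Definition gidx (k : int) : nat :=
  match k with Posz m => m.*2 | Negz m => m.*2.+1 end.

Lemma gidxK : cancel gidx genum.
Proof.
case=> m /=; rewrite /genum.
- by rewrite odd_double doubleK.
- rewrite /= odd_double /=. by rewrite uphalf_double.
Qed.

Lemma gidx_inj : injective gidx.
Proof. exact: can_inj gidxK. Qed.

Definition pick_c (S : seq int) (M : nat) : nat :=
  find (fun c : nat => (c%:Z) \notin S) (iota 0 M).

Lemma pick_cP (S : seq int) (M : nat) :
  (size S < M)%N -> (pick_c S M < M)%N /\ (pick_c S M)%:Z \notin S.
Proof.
move=> hS.
have hh : has (fun c : nat => (c%:Z) \notin S) (iota 0 M).
  apply/negPn/negP => /hasPn hn.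
  have : (size (map Posz (iota 0 M)) <= size S)%N.
    apply: uniq_leq_size; first by rewrite map_inj_uniq ?iota_uniq //; move=> x y [].
    move=> z /mapP [c hc ->]; move: (hn c hc); by rewrite negbK.
  by rewrite size_map size_iota leqNgt hS.
have hlt : (pick_c S M < M)%N by rewrite -[X in (_ < X)%N](size_iota 0) -has_find.
split=> //.
have := nth_find 0%N hh; by rewrite nth_iota.
Qed.

Section Constr.
Variables (N : nat) (E : {fset int}).
Let Mn : nat := (4 ^ N.+1)%N.
Let M : int := Mn%:Z.

Definition forb (L : seq int) (i : int) : seq int :=
  [seq nth 0 L (gidx (i + ((p.1 - p.2) %/ M)%Z + (t : nat)%:Z)) + p.2 - p.1 - i * M
   | p : int * int <- [seq (e1, e2) | e1 <- enum_fset E, e2 <- enum_fset E],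
     t : bool <- [:: false; true]].

Definition step (L : seq int) : int :=
  let i := genum (size L) in i * M + (pick_c (forb L i) Mn)%:Z.

Fixpoint Ls (n : nat) : seq int :=
  if n is n'.+1 then rcons (Ls n') (step (Ls n')) else [::].

Definition bb (i : int) : int := nth 0 (Ls (gidx i).+1) (gidx i).

Lemma size_Ls n : size (Ls n) = n.
Proof. by elim: n => //= n IH; rewrite size_rcons IH. Qed.

Lemma nth_Ls n m p : (p < n)%N -> (n <= m)%N -> nth 0 (Ls m) p = nth 0 (Ls n) p.
Proof.
move=> hp; elim: m => [|m IH]; first by rewrite leqn0 => /eqP ?; subst.
rewrite leq_eqVlt => /orP [/eqP -> //|]; rewrite ltnS => hnm.
by rewrite /= nth_rcons size_Ls (leq_trans hp hnm) IH.
Qed.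

Lemma bbE i : bb i = step (Ls (gidx i)).
Proof. by rewrite /bb /= nth_rcons size_Ls ltnn eqxx. Qed.

Lemma size_forb L i : (#|` E| <= 2 ^ N)%N -> (size (forb L i) < Mn)%N.
Proof.
move=> hEN.
have hE : #|` E| = size (enum_fset E) by [].
rewrite /forb size_allpairs size_allpairs /= -hE /Mn.
have hE2 : (#|` E| * #|` E| <= 4 ^ N)%N.
  by rewrite (_ : 4 = 2 * 2)%N // expnMn; apply: leq_mul.
rewrite expnS; have : (0 < 4 ^ N)%N by rewrite expn_gt0.
lia.
Qed.

Lemma M_gt0 : 0 < M.
Proof. by rewrite /M ltz_nat /Mn expn_gt0. Qed.

Lemma bb_block i : (#|` E| <= 2 ^ N)%N -> exists c : nat, (c < Mn)%N /\ bb i = i * M + c%:Z /\ (c%:Z \notin forb (Ls (gidx i)) i).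
Proof.
move=> hEN; rewrite bbE /step size_Ls gidxK.
have [h1 h2] := pick_cP _ _ (size_forb (Ls (gidx i)) i hEN).
by exists (pick_c (forb (Ls (gidx i)) i) Mn).
Qed.

Lemma key_arith (i j c cj e1 e2 bj : int) :
  0 <= c < M -> 0 <= cj < M -> bj = j * M + cj -> i * M + c + e1 = bj + e2 ->
  (j == i + ((e1 - e2) %/ M)%Z) || (j == i + ((e1 - e2) %/ M)%Z + 1).
Proof.
move=> hc hcj hbj heq.
have hM := M_gt0.
have hd := divz_eq (e1 - e2) M.
have hr0 : 0 <= ((e1 - e2) %% M)%Z by apply: modz_ge0; rewrite gt_eqF.
have hr1 : ((e1 - e2) %% M)%Z < M by apply: ltz_pmod.
move: hd hr0 hr1.
set q := ((e1 - e2) %/ M)%Z; set r := ((e1 - e2) %% M)%Z => hd hr0 hr1.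
have hk : (j - i - q) * M = c + r - cj by rewrite hbj in heq; nia.
have : (j - i - q == 0) || (j - i - q == 1) by nia.
move=> /orP [] /eqP h; apply/orP; [left|right]; apply/eqP; lia.
Qed.

Lemma bb_disj i j e1 e2 : (#|` E| <= 2 ^ N)%N -> (gidx j < gidx i)%N -> e1 \in E -> e2 \in E ->
  bb i + e1 != bb j + e2.
Proof.
move=> hEN hji h1 h2; apply/negP => /eqP heq.
have [c [hc [hbi hnot]]] := bb_block i hEN.
have [cj [hcj [hbj _]]] := bb_block j hEN.
have hbjL : bb j = nth 0 (Ls (gidx i)) (gidx j).
  by rewrite /bb (@nth_Ls (gidx j).+1 (gidx i) (gidx j)) ?ltnS.
have hk := key_arith i j c%:Z cj%:Z e1 e2 (bb j).
have hc' : (0 <= c%:Z < M) by rewrite /M ltz_nat hc.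
have hcj' : (0 <= cj%:Z < M) by rewrite /M ltz_nat hcj.
move: (hk hc' hcj' hbj); rewrite -hbi => /(_ heq) hjj.
apply/negP: hnot; apply/negPn.
have [t hj] : exists t : bool, j = i + ((e1 - e2) %/ M)%Z + (t : nat)%:Z.
  by case/orP: hjj => /eqP ->; [exists false | exists true]; rewrite /= ?addr0.
have hp : (e1, e2) \in [seq (x, y) | x <- enum_fset E, y <- enum_fset E].
  by apply: (allpairs_f (fun x y => (x, y))).
have ht : t \in [:: false; true] by case: (t).
have := allpairs_f (fun (p : int * int) (t : bool) =>
   nth 0 (Ls (gidx i)) (gidx (i + ((p.1 - p.2) %/ M)%Z + (t : nat)%:Z)) + p.2 - p.1 - i * M) hp ht.
rewrite /forb /= -hj -hbjL.
suff -> : bb j + e2 - e1 - i * M = c%:Z by [].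
have : bb j + e2 - e1 - i * M = (bb i + e1) - e1 - i * M by rewrite heq.
move=> ->; rewrite hbi; ring.
Qed.

End Constr.

Lemma M_eq (N : nat) : (4 ^+ N.+1 : int) = ((4 ^ N.+1)%N)%:Z.
Proof. by rewrite -natz natrX. Qed.

Theorem lemma3p1 (N : nat) (E : {fset int}) :
  (0 < N)%N -> (#|` E|%fset <= 2 ^ N)%N ->
  exists b : int -> int,
    (* (i) the translates b_i + E are pairwise disjoint *)
    (forall i j : int, i != j ->
       forall e1 e2 : int, e1 \in E -> e2 \in E -> b i + e1 != b j + e2) /\
    (* (ii) b_i lies in [i 4^(N+1), (i+1) 4^(N+1)) *)
    (forall i : int,
       i * 4 ^+ N.+1 <= b i /\ b i < (i + 1) * 4 ^+ N.+1) /\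
    (* (iii) Z is the union of n + B for -4^(N+1) <= n <= 4^(N+1) *)
    (forall z : int, exists n i : int,
       - 4 ^+ N.+1 <= n /\ n <= 4 ^+ N.+1 /\ z = n + b i).
Proof.
move=> _ hEN; exists (bb N E); rewrite M_eq.
have hM : (0 < ((4 ^ N.+1)%N)%:Z) by rewrite ltz_nat expn_gt0.
split; [|split].
- move=> i j hij e1 e2 h1 h2.
  have hg : gidx i != gidx j by apply: contra hij => /eqP /gidx_inj ->.
  case: (ltngtP (gidx i) (gidx j)) => hlt.
  + by rewrite eq_sym; apply: bb_disj.
  + by apply: bb_disj.
  + by rewrite hlt eqxx in hg.
- move=> i; have [c [hc [-> _]]] := bb_block N E i hEN.
  have : (c%:Z < ((4 ^ N.+1)%N)%:Z) by rewrite ltz_nat.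
  move: hM; set m := ((4 ^ N.+1)%N)%:Z => hM hcm.
  split; nia.
- move=> z; set m := ((4 ^ N.+1)%N)%:Z.
  have [c [hc [hb _]]] := bb_block N E (z %/ m)%Z hEN.
  have hd := divz_eq z m.
  have hr0 : 0 <= (z %% m)%Z by apply: modz_ge0; rewrite gt_eqF.
  have hr1 : (z %% m)%Z < m by apply: ltz_pmod.
  have hcm : (c%:Z < m) by rewrite ltz_nat.
  exists ((z %% m)%Z - c%:Z), (z %/ m)%Z.
  rewrite hb; split; [lia|split; [lia|]].
  rewrite {1}hd; ring.
Qed.
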